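(* Let $P$ be a special product rule with $P$-product $*$. Then for all series $f,g$, $\overline{f*g}=\overline f*\overline g$; consequently reversal is an endomorphism of the commutative $\mathbb Q$-algebra $(\mathbb Q\langle\langle\Sigma\rangle\rangle;\mathbb 0,c\cdot,+,* )$.
   Context: Let $\Sigma$ be a finite alphabet, $\Sigma^*$ the finite words with empty word $\varepsilon$. A series is $f:\Sigma^*\to\mathbb Q$, $f_w=f(w)$; series form a $\mathbb Q$-vector space under pointwise operations with zero $\mathbb 0$. For $a\in\Sigma$, $\delta_af$ is $w\mapsto f(aw)$. The reversal $\overline f$ is $w\mapsto f(\overline w)$ with $\overline w$ the mirror image of $w$. Terms over $X$: generated by $u,v::=x\mid 0\mid c\cdot u\mid u+v\mid u*v$. A product rule is a term $P$ over $\{x,\dot x,y,\dot y\}$; $P(s_1,\dots,s_4)$ is substitution. The $P$-product $*$ and semantics $[\![u]\!]_\varrho$ are the unique pair with $(f*g)_\varepsilon=f_\varepsilon g_\varepsilon$, $\delta_a(f*g)=[\![P]\!]_{[x\mapsto f,\dot x\mapsto\delta_af,y\mapsto g,\dot y\mapsto\delta_ag]}$, and $[\![\cdot]\!]_\varrho$ interpreting variables via $\varrho$, constructors by zero, scalar multiplication, addition, $*$. $u\approx v$ iff $u,v$ denote the same commutative polynomial. $P$ is special if $P(x+y,\dot x+\dot y,z,\dot z)\approx P(x,\dot x,z,\dot z)+P(y,\dot y,z,\dot z)$, $P(x,\dot x,y*z,P(y,\dot y,z,\dot z))\approx P(x*y,P(x,\dot x,y,\dot y),z,\dot z)$, $P(x,\dot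 x,y,\dot y)\approx P(y,\dot y,x,\dot x)$. *)

(* Defs.v *)
From HB Require Import structures.
From mathcomp Require Import all_boot all_algebra.
From mathcomp Require Import mpoly.
Set Implicit Arguments. Unset Strict Implicit. Unset Printing Implicit Defensive.
Import GRing.Theory.
Local Open Scope ring_scope.

Definition series (S : finType) := seq S -> rat.

Definition szero {S : finType} : series S := fun _ => 0.
Definition sscale {S : finType} (c : rat) (f : series S) : series S :=
  fun w => c * f w.
Definition sadd {S : finType} (f g : series S) : series S := fun w => f w + g w.
Definition sdelta {S : finType} (a : S) (f : series S) : series S :=
  fun w => f (a :: w).
Definition srev {S : finType} (f : series S) : series S := fun w => f (rev w).

Inductive term (V : Type) : Type :=
  | TVar of V
  | TZero
  | TScale of rat & term V
  | TAdd of term V & term V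
  | TMul of term V & term V.
Arguments TZero {V}.

Fixpoint subst (V W : Type) (s : V -> term W) (t : term V) : term W :=
  match t with
  | TVar x => s x
  | TZero => TZero
  | TScale c u => TScale c (subst s u)
  | TAdd u v => TAdd (subst s u) (subst s v)
  | TMul u v => TMul (subst s u) (subst s v)
  end.

(* A product rule is a term over {x, x', y, y'}, encoded as 'I_4 with
   x = 0, x' = 1, y = 2, y' = 3. *)
Definition prod_rule := term 'I_4.

Definition env4 (T : Type) (s0 s1 s2 s3 : T) (i : 'I_4) : T :=
  match val i with 0 => s0 | 1 => s1 | 2 => s2 | _ => s3 end.

Definition papp (W : Type) (P : prod_rule) (s0 s1 s2 s3 : term W) : term W :=
  subst (env4 s0 s1 s2 s3) P.

Fixpoint sem (S : finType) (mul : series S -> series S -> series S)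
  (V : Type) (t : term V) (rho : V -> series S) : series S :=
  match t with
  | TVar x => rho x
  | TZero => szero
  | TScale c u => sscale c (sem mul u rho)
  | TAdd u v => sadd (sem mul u rho) (sem mul v rho)
  | TMul u v => mul (sem mul u rho) (sem mul v rho)
  end.

(* mul is the P-product: it satisfies the defining equations
   (f*g)_eps = f_eps g_eps and
   delta_a (f*g) = [[P]]_[x |-> f, x' |-> delta_a f, y |-> g, y' |-> delta_a g]
   (these equations determine mul uniquely). *)
Definition is_P_product (S : finType) (P : prod_rule)
  (mul : series S -> series S -> series S) : Prop :=
  (forall f g, mul f g [::] = f [::] * g [::]) /\
  (forall f g (a : S),
      sdelta a (mul f g) = sem mul P (env4 f (sdelta a f) g (sdelta a g))).

Fixpoint tpoly (n : nat) (t : term 'I_n) : {mpoly rat[n]} :=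
  match t with
  | TVar i => 'X_i
  | TZero => 0
  | TScale c u => c *: tpoly u
  | TAdd u v => tpoly u + tpoly v
  | TMul u v => tpoly u * tpoly v
  end.

Definition teqv (n : nat) (u v : term 'I_n) : Prop := tpoly u = tpoly v.

Definition v6 (k : nat) : term 'I_6 := TVar (inord k).

Definition special (P : prod_rule) : Prop :=
  let x := v6 0 in let x' := v6 1 in let y := v6 2 in
  let y' := v6 3 in let z := v6 4 in let z' := v6 5 in
  [/\ teqv (papp P (TAdd x y) (TAdd x' y') z z')
           (TAdd (papp P x x' z z') (papp P y y' z z')),
      teqv (papp P x x' (TMul y z) (papp P y y' z z'))
           (papp P (TMul x y) (papp P x x' y y') z z')
    & teqv (papp P x x' y y') (papp P y y' x x')].

(* Main.v *)
From HB Require Import structures.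
Require Import Defs.
From mathcomp Require Import all_boot all_algebra.
From mathcomp Require Import mpoly.
From mathcomp Require Import ring.
From mathcomp Require Import boolp.
From Stdlib Require Import FunctionalExtensionality.
Set Implicit Arguments. Unset Strict Implicit. Unset Printing Implicit Defensive.
Import GRing.Theory Num.Theory.
Local Open Scope ring_scope.

Section MDef.
Variables (S : finType) (a b d : rat).

Fixpoint Mw (f g : series S) (w : seq S) {struct w} : rat :=
  match w with
  | [::] => f [::] * g [::]
  | x :: w' => a * Mw f g w' + b * Mw f (sdelta x g) w'
              + b * Mw (sdelta x f) g w' + d * Mw (sdelta x f) (sdelta x g) w'
  end.

Definition lin4 (c1 c2 c3 c4 : rat) (f1 f2 f3 f4 : series S) : series S :=
  fun u => c1 * f1 u + c2 * f2 u + c3 * f3 u + c4 * f4 u.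

Lemma Mw_comm f g w : Mw f g w = Mw g f w.
Proof.
elim: w f g => [|x w IH] f g /=; first by rewrite mulrC.
rewrite (IH f g) (IH f (sdelta x g)) (IH (sdelta x f) g) (IH (sdelta x f) (sdelta x g)).
ring.
Qed.

Lemma Mw_lin4l c1 c2 c3 c4 f1 f2 f3 f4 g w :
  Mw (lin4 c1 c2 c3 c4 f1 f2 f3 f4) g w =
  c1 * Mw f1 g w + c2 * Mw f2 g w + c3 * Mw f3 g w + c4 * Mw f4 g w.
Proof.
elim: w f1 f2 f3 f4 g => [|x w IH] f1 f2 f3 f4 g /=; first by rewrite /lin4; ring.
have E : sdelta x (lin4 c1 c2 c3 c4 f1 f2 f3 f4) =
   lin4 c1 c2 c3 c4 (sdelta x f1) (sdelta x f2) (sdelta x f3) (sdelta x f4) by [].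
rewrite E !IH; ring.
Qed.

Lemma Mw_lin4r c1 c2 c3 c4 f1 f2 f3 f4 g w :
  Mw g (lin4 c1 c2 c3 c4 f1 f2 f3 f4) w =
  c1 * Mw g f1 w + c2 * Mw g f2 w + c3 * Mw g f3 w + c4 * Mw g f4 w.
Proof. by rewrite Mw_comm Mw_lin4l !(Mw_comm g). Qed.

Lemma delta_Mw x f g : sdelta x (Mw f g) =
  lin4 a b b d (Mw f g) (Mw f (sdelta x g)) (Mw (sdelta x f) g)
     (Mw (sdelta x f) (sdelta x g)).
Proof. by []. Qed.

Lemma Mw_assoc (H : b * b = b + a * d) f g h w :
  Mw (Mw f g) h w = Mw f (Mw g h) w.
Proof.
elim: w f g h => [|x w IH] f g h /=; first by rewrite mulrA.
rewrite !delta_Mw !Mw_lin4l !Mw_lin4r !IH.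
set N1 := Mw f (Mw g (sdelta x h)) w.
set N2 := Mw (sdelta x f) (Mw g h) w.
have key : forall L R : rat, L - R = (b * b - b - a * d) * (N2 - N1) -> L = R.
  move=> L R; rewrite H => E; apply/eqP; rewrite -subr_eq0 E; apply/eqP; ring.
apply: key; rewrite /N1 /N2; ring.
Qed.

Lemma Mw_add_l f1 f2 g w : Mw (sadd f1 f2) g w = Mw f1 g w + Mw f2 g w.
Proof.
elim: w f1 f2 g => [|x w IH] f1 f2 g /=; first by rewrite /sadd mulrDl.
have E y : sdelta y (sadd f1 f2) = sadd (sdelta y f1) (sdelta y f2) by [].
rewrite E !IH; ring.
Qed.

Lemma Mw_scale_l c f g w : Mw (sscale c f) g w = c * Mw f g w.
Proof.
elim: w f g => [|x w IH] f g /=; first by rewrite /sscale mulrA.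
have E y : sdelta y (sscale c f) = sscale c (sdelta y f) by [].
rewrite E !IH; ring.
Qed.

Lemma Mw_local w : forall f f' g g',
  (forall u, size u <= size w -> f u = f' u)%N ->
  (forall u, size u <= size w -> g u = g' u)%N ->
  Mw f g w = Mw f' g' w.
Proof.
elim: w => [|x w IH] f f' g g' Hf Hg /=; first by rewrite Hf ?Hg.
have Hd (h h' : series S) : (forall u, size u <= (size w).+1 -> h u = h' u)%N ->
   forall u, (size u <= size w)%N -> sdelta x h u = sdelta x h' u.
  by move=> Hh u Hu; rewrite /sdelta Hh.
rewrite (IH f f' g g') ?(IH f f' (sdelta x g) (sdelta x g'))
  ?(IH (sdelta x f) (sdelta x f') g g')
  ?(IH (sdelta x f) (sdelta x f') (sdelta x g) (sdelta x g')) //;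
  try (apply: Hd => //); move=> u Hu; (apply: Hf || apply: Hg); exact: leqW.
Qed.

Definition sdeltaR (x : S) (f : series S) : series S := fun u => f (rcons u x).

Lemma Mw_rcons w x f g : Mw f g (rcons w x) =
  a * Mw f g w + b * Mw f (sdeltaR x g) w + b * Mw (sdeltaR x f) g w
  + d * Mw (sdeltaR x f) (sdeltaR x g) w.
Proof.
elim: w f g => [|y w IH] f g /=; first by rewrite /sdeltaR /sdelta /=; ring.
rewrite !IH.
have C h : sdelta y (sdeltaR x h) = sdeltaR x (sdelta y h) by [].
rewrite !C; ring.
Qed.

Lemma Mw_rev_aux w : forall f g, Mw f g (rev w) = Mw (srev f) (srev g) w.
Proof.
have E x h : srev (sdeltaR x h) = sdelta x (srev h).
  apply: functional_extensionality => u; by rewrite /srev /sdeltaR /sdelta rev_cons.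
elim: w => [|x w IH] f g; first by [].
by rewrite rev_cons Mw_rcons !IH [RHS]/= !E.
Qed.

Lemma Mw_rev f g : srev (Mw f g) = Mw (srev f) (srev g).
Proof. apply: functional_extensionality => w; exact: Mw_rev_aux. Qed.
Lemma Mw_zero_l g w : Mw szero g w = 0.
Proof.
elim: w g => [|x w IH] g /=; first by rewrite /szero mul0r.
have E y : sdelta y (@szero S) = szero by [].
rewrite E !IH; ring.
Qed.

Lemma Mw_add_r f g1 g2 w : Mw f (sadd g1 g2) w = Mw f g1 w + Mw f g2 w.
Proof. by rewrite Mw_comm Mw_add_l !(Mw_comm f). Qed.
Lemma Mw_scale_r c f g w : Mw f (sscale c g) w = c * Mw f g w.
Proof. by rewrite Mw_comm Mw_scale_l !(Mw_comm f). Qed.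
Lemma Mw_zero_r g w : Mw g szero w = 0.
Proof. by rewrite Mw_comm Mw_zero_l. Qed.

Section URing.
Hypothesis Mw_assoc : forall f g h w, Mw (Mw f g) h w = Mw f (Mw g h) w.

Record U := mkU { u1 : rat; u2 : series S }.
HB.instance Definition _ := gen_eqMixin U.
HB.instance Definition _ := gen_choiceMixin U.

Lemma U_ext x y : u1 x = u1 y -> (forall w, u2 x w = u2 y w) -> x = y.
Proof.
case: x => x1 x2; case: y => y1 y2 /= -> E.
by rewrite (functional_extensionality _ _ E).
Qed.

Definition Uzero := mkU 0 szero.
Definition Uadd x y := mkU (u1 x + u1 y) (sadd (u2 x) (u2 y)).
Definition Uopp x := mkU (- u1 x) (sscale (-1) (u2 x)).
Definition Uone := mkU 1 szero.
Definition Umul x y := mkU (u1 x * u1 y)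
  (sadd (sadd (sscale (u1 x) (u2 y)) (sscale (u1 y) (u2 x))) (Mw (u2 x) (u2 y))).

Lemma UaddA : associative Uadd.
Proof. by move=> x y z; apply: U_ext => [|w] /=; rewrite /sadd ?addrA. Qed.
Lemma UaddC : commutative Uadd.
Proof. by move=> x y; apply: U_ext => [|w] /=; rewrite /sadd addrC. Qed.
Lemma Uadd0 : left_id Uzero Uadd.
Proof. by move=> x; apply: U_ext => [|w] /=; rewrite /sadd /szero add0r. Qed.
Lemma UaddN : left_inverse Uzero Uopp Uadd.
Proof. by move=> x; apply: U_ext => [|w] /=; rewrite /sadd /sscale /szero; ring. Qed.

HB.instance Definition _ := GRing.isZmodule.Build U UaddA UaddC Uadd0 UaddN.

Lemma UmulA : associative Umul.
Proof.
move=> x y z; apply: U_ext => [|w] /=; first by rewrite mulrA.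
rewrite /sadd /sscale !Mw_add_l !Mw_add_r !Mw_scale_l !Mw_scale_r Mw_assoc; ring.
Qed.
Lemma UmulC : commutative Umul.
Proof.
move=> x y; apply: U_ext => [|w] /=; first by rewrite mulrC.
rewrite /sadd /sscale Mw_comm; ring.
Qed.
Lemma Umul1 : left_id Uone Umul.
Proof.
move=> x; apply: U_ext => [|w] /=; first by rewrite mul1r.
rewrite /sadd /sscale Mw_zero_l /szero; ring.
Qed.
Lemma UmulDl : left_distributive Umul Uadd.
Proof.
move=> x y z; apply: U_ext => [|w] /=; first by rewrite mulrDl.
rewrite /sadd /sscale !Mw_add_l; ring.
Qed.
Lemma Uone_neq0 : Uone != Uzero.
Proof. by apply/eqP => /(f_equal u1) /= /eqP; rewrite oner_eq0. Qed.

HB.instance Definition _ := GRing.Zmodule_isComNzRing.Build U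
  UmulA UmulC Umul1 UmulDl Uone_neq0.

Definition iota (r : rat) : U := mkU r szero.

Lemma iota_add : zmod_morphism iota.
Proof. by move=> r s; apply: U_ext => [|w] //=; rewrite /sadd /sscale /szero; ring. Qed.
HB.instance Definition _ := GRing.isZmodMorphism.Build rat U iota iota_add.
Lemma iota_mul : multiplicative iota.
Proof.
split; last by [].
move=> r s; apply: U_ext => [|w] //=.
by rewrite /sadd /sscale /szero Mw_zero_l; ring.
Qed.
HB.instance Definition _ := GRing.isMultiplicative.Build rat U iota iota_mul.

Lemma u1M (x y : U) : u1 (x * y) = u1 x * u1 y. Proof. by []. Qed.
Lemma u2M (x y : U) : u2 (x * y) =
  sadd (sadd (sscale (u1 x) (u2 y)) (sscale (u1 y) (u2 x))) (Mw (u2 x) (u2 y)).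
Proof. by []. Qed.
Lemma u1D (x y : U) : u1 (x + y) = u1 x + u1 y. Proof. by []. Qed.
Lemma u2D (x y : U) : u2 (x + y) = sadd (u2 x) (u2 y). Proof. by []. Qed.
Lemma u10 : u1 (0 : U) = 0. Proof. by []. Qed.
Lemma u20 : u2 (0 : U) = szero. Proof. by []. Qed.

Fixpoint tevU (n : nat) (t : term 'I_n) (v : 'I_n -> U) : U :=
  match t with
  | TVar i => v i
  | TZero => 0
  | TScale c u => iota c * tevU u v
  | TAdd u1 u2 => tevU u1 v + tevU u2 v
  | TMul u1 u2 => tevU u1 v * tevU u2 v
  end.

Lemma tevU_mmap (n : nat) (t : term 'I_n) v : mmap iota v (tpoly t) = tevU t v.
Proof.
elim: t => [i||c u IH|u IHu w IHw|u IHu w IHw] /=.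
- by rewrite mmapX mmap1U.
- by rewrite mmap0.
- by rewrite mmapZ IH.
- by rewrite mmapD IHu IHw.
- by rewrite rmorphM /= IHu IHw.
Qed.

Lemma tevU_sem (n : nat) (t : term 'I_n) (rho : 'I_n -> series S) :
  let v := fun i => mkU 0 (rho i) in
  u1 (tevU t v) = 0 /\ u2 (tevU t v) = sem Mw t rho.
Proof.
move=> v; elim: t => [i||c u [IH1 IH2]|u [IHu1 IHu2] w [IHw1 IHw2]|u [IHu1 IHu2] w [IHw1 IHw2]] //=.
- split; first by rewrite IH1 mulr0.
  rewrite IH1 IH2; apply: functional_extensionality => x.
  by rewrite /sadd /sscale Mw_zero_l /szero /=; ring.
- by rewrite IHu1 IHw1 IHu2 IHw2 addr0.
- split; first by rewrite IHu1 mul0r.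
  rewrite IHu1 IHw1 IHu2 IHw2; apply: functional_extensionality => x.
  by rewrite /sadd /sscale; ring.
Qed.

Lemma sem_teqv (n : nat) (t1 t2 : term 'I_n) (rho : 'I_n -> series S) :
  tpoly t1 = tpoly t2 -> sem Mw t1 rho = sem Mw t2 rho.
Proof.
move=> E.
have := tevU_sem t1 rho; have := tevU_sem t2 rho => /= [[_ <-]] [_ <-].
by rewrite -!tevU_mmap E.
Qed.

End URing.

End MDef.

Lemma comp_scale_coef (n : nat) (c : 'I_n -> rat) (p : {mpoly rat[n]}) m :
  (p \mPo [tuple c i *: 'X_i | i < n])@_m = (\prod_(i < n) c i ^+ m i) * p@_m.
Proof.
have EX m' : 'X_[m'] \mPo [tuple c i *: 'X_i | i < n] =
    (\prod_(i < n) c i ^+ m' i) *: 'X_[m'].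
  rewrite comp_mpolyX.
  under eq_bigr => i _ do rewrite tnth_mktuple exprZn.
  by rewrite scaler_prod -mmap1_id.
rewrite comp_mpolyEX.
under eq_bigr => m' _ do rewrite EX scalerA.
rewrite raddf_sum /=.
under eq_bigr => m' _ do rewrite mcoeffZ mcoeffX.
case: (boolP (m \in msupp p)) => Hm.
- rewrite (bigD1_seq m) ?msupp_uniq //= eqxx mulr1.
  rewrite [X in _ + X]big1 ?addr0; first by rewrite mulrC.
  by move=> m' /negbTE ->; rewrite mulr0.
- rewrite big_seq big1; first by rewrite (memN_msupp_eq0 Hm) mulr0.
  move=> m' Hm'; case: eqP => [E|]; last by rewrite mulr0.
  by move: Hm'; rewrite E (negbTE Hm).
Qed.

Definition o4 (k : nat) : 'I_4 := inord k.
Definition X4 (k : nat) : term 'I_4 := TVar (o4 k).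
Arguments X4 : simpl never.
Lemma tpoly_X4 k : tpoly (X4 k) = 'X_(o4 k). Proof. by []. Qed.

Lemma val_o4 k : (k < 4)%N -> val (o4 k) = k.
Proof. by move=> H; apply: inordK. Qed.

Lemma ord4P (Pr : 'I_4 -> Prop) :
  Pr (o4 0) -> Pr (o4 1) -> Pr (o4 2) -> Pr (o4 3) -> forall i, Pr i.
Proof.
move=> H0 H1 H2 H3 [[|[|[|[|k]]]] Hi] //.
- by have -> : Ordinal Hi = o4 0 by apply: val_inj; rewrite val_o4.
- by have -> : Ordinal Hi = o4 1 by apply: val_inj; rewrite val_o4.
- by have -> : Ordinal Hi = o4 2 by apply: val_inj; rewrite val_o4.
- by have -> : Ordinal Hi = o4 3 by apply: val_inj; rewrite val_o4.
Qed.

Lemma big4 (F : 'I_4 -> rat) :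
  \prod_(i < 4) F i = F (o4 0) * F (o4 1) * F (o4 2) * F (o4 3).
Proof.
rewrite !big_ord_recl big_ord0 mulr1 !mulrA.
by congr (F _ * F _ * F _ * F _); apply: val_inj; rewrite val_o4.
Qed.

Lemma env4_o4 (T : Type) (s0 s1 s2 s3 : T) :
  [/\ env4 s0 s1 s2 s3 (o4 0) = s0, env4 s0 s1 s2 s3 (o4 1) = s1,
      env4 s0 s1 s2 s3 (o4 2) = s2 & env4 s0 s1 s2 s3 (o4 3) = s3].
Proof. by rewrite /env4 !val_o4. Qed.

Lemma subst_ext (V W : Type) (s1 s2 : V -> term W) t :
  (forall i, s1 i = s2 i) -> subst s1 t = subst s2 t.
Proof. by move=> E; elim: t => //= [c u ->|u -> w ->|u -> w ->]. Qed.

Lemma subst_comp (V W X : Type) (s : W -> term X) (s' : V -> term W) t :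
  subst s (subst s' t) = subst (fun i => subst s (s' i)) t.
Proof. by elim: t => //= [c u ->|u -> w ->|u -> w ->]. Qed.

Lemma subst_papp (W X : Type) (s : W -> term X) P s0 s1 s2 s3 :
  subst s (papp P s0 s1 s2 s3) =
  papp P (subst s s0) (subst s s1) (subst s s2) (subst s s3).
Proof.
rewrite /papp subst_comp; apply: subst_ext => i.
by rewrite /env4; case: (val i) => [|[|[|k]]].
Qed.

Lemma tpoly_subst (n k : nat) (s : 'I_n -> term 'I_k) (t : term 'I_n) :
  tpoly (subst s t) = tpoly t \mPo [tuple tpoly (s i) | i < n].
Proof.
elim: t => [i||c u IH|u IHu w IHw|u IHu w IHw] /=.
- by rewrite comp_mpolyXU -tnth_nth tnth_mktuple.
- by rewrite comp_mpoly0.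
- by rewrite comp_mpolyZ IH.
- by rewrite comp_mpolyD IHu IHw.
- by rewrite rmorphM /= IHu IHw.
Qed.

Lemma teqv_subst (n k : nat) (s : 'I_n -> term 'I_k) (u v : term 'I_n) :
  teqv u v -> teqv (subst s u) (subst s v).
Proof. by rewrite /teqv !tpoly_subst => ->. Qed.

Lemma tpoly_papp (k : nat) P (s0 s1 s2 s3 : term 'I_k) :
  tpoly (papp P s0 s1 s2 s3) =
  tpoly P \mPo [tuple tpoly (env4 s0 s1 s2 s3 i) | i < 4].
Proof. exact: tpoly_subst. Qed.

Lemma tpoly_papp_id P : tpoly (papp P (X4 0) (X4 1) (X4 2) (X4 3)) = tpoly P.
Proof.
rewrite tpoly_papp -[RHS]comp_mpoly_id; congr (_ \mPo _).
apply: eq_mktuple; apply: ord4P; by rewrite /env4 val_o4.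
Qed.

Definition tau6 (k : nat) (l : seq (term 'I_k)) (j : 'I_6) : term 'I_k :=
  nth TZero l (val j).

Lemma subst_v6 (k : nat) (l : seq (term 'I_k)) i :
  (i < 6)%N -> tau6 l (inord i) = nth TZero l i.
Proof. by move=> H; rewrite /tau6 /= inordK. Qed.
Arguments tau6 : simpl never.

Section Special.
Variable (P : prod_rule).
Hypothesis HP : special P.

Lemma spec1 (k : nat) (x x' y y' z z' : term 'I_k) :
  teqv (papp P (TAdd x y) (TAdd x' y') z z') (TAdd (papp P x x' z z') (papp P y y' z z')).
Proof.
case: HP => H _ _; have := teqv_subst (tau6 [:: x; x'; y; y'; z; z']) H.
by rewrite /= !subst_papp /= !subst_v6.
Qed.

Lemma spec2 (k : nat) (x x' y y' z z' : term 'I_k) :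
  teqv (papp P x x' (TMul y z) (papp P y y' z z')) (papp P (TMul x y) (papp P x x' y y') z z').
Proof.
case: HP => _ H _; have := teqv_subst (tau6 [:: x; x'; y; y'; z; z']) H.
by rewrite /= !subst_papp /= !subst_v6.
Qed.

Lemma spec3 (k : nat) (x x' y y' : term 'I_k) :
  teqv (papp P x x' y y') (papp P y y' x x').
Proof.
case: HP => _ _ H; have := teqv_subst (tau6 [:: x; x'; y; y'; TZero; TZero]) H.
by rewrite /= !subst_papp /= !subst_v6.
Qed.

Local Notation Q := (tpoly P).
Local Notation Pid := (papp P (X4 0) (X4 1) (X4 2) (X4 3)).

Lemma two_pow k : (2 : rat) ^+ k = 2 -> k = 1%N.
Proof.
rewrite -natrX => /eqP; rewrite eqr_nat => /eqP.
case: k => [|[|k]] //; rewrite !expnS => E.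
have : (4 <= 2 * (2 * 2 ^ k))%N by rewrite mulnA leq_pmulr ?expn_gt0.
by rewrite E.
Qed.

Lemma scale_deg (c : 'I_4 -> rat) m :
  Q \mPo [tuple c i *: 'X_i | i < 4] = Q + Q ->
  Q@_m != 0 -> c (o4 0) ^+ m (o4 0) * c (o4 1) ^+ m (o4 1) *
               c (o4 2) ^+ m (o4 2) * c (o4 3) ^+ m (o4 3) = 2.
Proof.
move=> E Hm; have := f_equal (mcoeff m) E.
rewrite comp_scale_coef big4 mcoeffD -mulr2n => H.
by apply: (mulIf Hm); rewrite H mulr_natl.
Qed.

Lemma degx m : Q@_m != 0 -> (m (o4 0) + m (o4 1) = 1)%N.
Proof.
move=> Hm; apply: two_pow.
have E : Q \mPo [tuple (nth 0 [:: 1 + 1; 1 + 1; 1; 1] (val i)) *: 'X_i | i < 4] = Q + Q.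
  have := spec1 (X4 0) (X4 1) (X4 0) (X4 1) (X4 2) (X4 3).
  rewrite /teqv /= tpoly_papp_id => <-; rewrite tpoly_papp; congr (_ \mPo _).
  apply: eq_mktuple; apply: ord4P; rewrite /env4 !val_o4 //=.
  - by rewrite scalerDl scale1r.
  - by rewrite scalerDl scale1r.
  - by rewrite scale1r.
  - by rewrite scale1r.
have := scale_deg E Hm; rewrite !val_o4 //= !expr1n !mulr1 exprD. by [].
Qed.

Lemma degy m : Q@_m != 0 -> (m (o4 2) + m (o4 3) = 1)%N.
Proof.
move=> Hm; apply: two_pow.
have E : Q \mPo [tuple (nth 0 [:: 1; 1; 1 + 1; 1 + 1] (val i)) *: 'X_i | i < 4] = Q + Q.
  have E1 := spec3 (X4 0) (X4 1) (TAdd (X4 2) (X4 2)) (TAdd (X4 3) (X4 3)).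
  have E2 := spec1 (X4 2) (X4 3) (X4 2) (X4 3) (X4 0) (X4 1).
  have E3 := spec3 (X4 0) (X4 1) (X4 2) (X4 3).
  move: E1 E2 E3; rewrite /teqv /= tpoly_papp_id => E1 E2 E3.
  transitivity (tpoly (papp P (X4 0) (X4 1) (TAdd (X4 2) (X4 2)) (TAdd (X4 3) (X4 3)))); last by rewrite E1 E2 -E3.
  rewrite tpoly_papp; congr (_ \mPo _).
  apply: eq_mktuple; apply: ord4P; rewrite /env4 !val_o4 //=.
  - by rewrite scale1r.
  - by rewrite scale1r.
  - by rewrite scalerDl scale1r.
  - by rewrite scalerDl scale1r.
have := scale_deg E Hm; rewrite !val_o4 //= !expr1n !mul1r -exprD; by [].
Qed.

Definition e4 (i j : nat) : 'X_{1..4} := (U_(o4 i) + U_(o4 j))%MM.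

Lemma o4_eq i k : (i < 4)%N -> (k < 4)%N -> (o4 i == o4 k) = (i == k).
Proof. by move=> Hi Hk; rewrite -val_eqE /= !val_o4. Qed.

Lemma mnm4_eq (m m' : 'X_{1..4}) : (m == m') =
  [&& m (o4 0) == m' (o4 0), m (o4 1) == m' (o4 1), m (o4 2) == m' (o4 2)
    & m (o4 3) == m' (o4 3)].
Proof.
apply/eqP/and4P => [->|[/eqP E0 /eqP E1 /eqP E2 /eqP E3]]; first by rewrite !eqxx.
by apply/mnmP; apply: ord4P.
Qed.

Lemma e4E i j k : (i < 4)%N -> (j < 4)%N -> (k < 4)%N ->
  e4 i j (o4 k) = ((i == k) + (j == k))%N.
Proof. by move=> Hi Hj Hk; rewrite /e4 mnmDE !mnm1E !o4_eq. Qed.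

Lemma Q_bil : Q = Q@_(e4 0 2) *: 'X_[e4 0 2] + Q@_(e4 0 3) *: 'X_[e4 0 3]
               + Q@_(e4 1 2) *: 'X_[e4 1 2] + Q@_(e4 1 3) *: 'X_[e4 1 3].
Proof.
apply/mpolyP => m; rewrite !mcoeffD !mcoeffZ !mcoeffX.
have [Hm0|Hm] := eqVneq Q@_m 0.
  have Z i j : Q@_(e4 i j) * (e4 i j == m)%:R = 0.
    by case: eqP => [->|]; rewrite ?mulr0 // Hm0 mul0r.
  by rewrite !Z Hm0 !addr0.
have Hx := degx Hm; have Hy := degy Hm.
have Ev i j : (i < 4)%N -> (j < 4)%N -> (e4 i j == m) = 
    [&& (i == 0) + (j == 0) == m (o4 0), (i == 1) + (j == 1) == m (o4 1),
        (i == 2) + (j == 2) == m (o4 2) & (i == 3) + (j == 3) == m (o4 3)]%N.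
  by move=> Hi Hj; rewrite mnm4_eq !e4E.
rewrite !Ev //.
move: Hx Hy; case E0: (m (o4 0)) => [|[|?]]; case E1: (m (o4 1)) => [|[|?]] //=;
  case E2: (m (o4 2)) => [|[|?]]; case E3: (m (o4 3)) => [|[|?]] //= _ _;
  rewrite !mulr0 !mulr1 ?add0r ?addr0; congr (mcoeff _ _);
  by apply/eqP; rewrite eq_sym Ev // E0 E1 E2 E3.
Qed.

Definition qf (y0 y1 y2 y3 : rat) :=
  Q@_(e4 0 2) * y0 * y2 + Q@_(e4 0 3) * y0 * y3
  + Q@_(e4 1 2) * y1 * y2 + Q@_(e4 1 3) * y1 * y3.

Lemma meval_Q (w : 'I_4 -> rat) :
  meval w Q = qf (w (o4 0)) (w (o4 1)) (w (o4 2)) (w (o4 3)).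
Proof.
rewrite {1}Q_bil /qf !mevalD !mevalZ /e4 !mpolyXD !mevalM !mevalXU.
by rewrite !mulrA.
Qed.

Lemma meval_papp (k : nat) (w : 'I_k -> rat) (s0 s1 s2 s3 : term 'I_k) :
  meval w (tpoly (papp P s0 s1 s2 s3)) =
  qf (meval w (tpoly s0)) (meval w (tpoly s1)) (meval w (tpoly s2))
     (meval w (tpoly s3)).
Proof.
rewrite tpoly_papp comp_mpoly_meval meval_Q !tnth_mktuple.
by case: (env4_o4 s0 s1 s2 s3) => -> -> -> ->.
Qed.

Definition v4 (l : seq rat) (i : 'I_4) : rat := nth 0 l (val i).

Lemma v4E l k : (k < 4)%N -> meval (v4 l) (tpoly (X4 k)) = nth 0 l k.
Proof. by move=> H; rewrite tpoly_X4 mevalXU /v4 val_o4. Qed.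

Lemma coef_sym : Q@_(e4 0 3) = Q@_(e4 1 2).
Proof.
have := f_equal (meval (v4 [:: 1; 0; 0; 1])) (spec3 (X4 0) (X4 1) (X4 2) (X4 3)).
rewrite !meval_papp !v4E // /qf.
move=> E; rewrite -[LHS]/(_ : rat). 
set A := Q@_(e4 0 2) in E; set B := Q@_(e4 0 3) in E *;
set C := Q@_(e4 1 2) in E *; set D := Q@_(e4 1 3) in E.
move: E => /=. 
have -> : A * 1 * 0 + B * 1 * 1 + C * 0 * 0 + D * 0 * 1 = B by ring.
have -> : A * 0 * 1 + B * 0 * 0 + C * 1 * 1 + D * 1 * 0 = C by ring.
done.
Qed.

Lemma coef_assoc : Q@_(e4 0 3) * Q@_(e4 0 3) =
   Q@_(e4 0 3) + Q@_(e4 0 2) * Q@_(e4 1 3).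
Proof.
have := f_equal (meval (v4 [:: 1; 0; 0; 1]))
   (spec2 (X4 0) (X4 1) (X4 0) (X4 1) (X4 2) (X4 3)).
rewrite !meval_papp /= !mevalM !v4E // /qf.
set A := Q@_(e4 0 2); set B := Q@_(e4 0 3); set C := Q@_(e4 1 2);
set D := Q@_(e4 1 3) => E.
transitivity (A * 1 * (1 * 0) + B * 1 * (A * 1 * 0 + B * 1 * 1 + C * 0 * 0 + D * 0 * 1) +
       C * 0 * (1 * 0) + D * 0 * (A * 1 * 0 + B * 1 * 1 + C * 0 * 0 + D * 0 * 1)); first by ring.
move: E => /= ->; ring.
Qed.
End Special.

Lemma sem_local (S : finType) (a b d : rat) (mul : series S -> series S -> series S) n :
  (forall f g u, (size u <= n)%N -> mul f g u = Mw a b d f g u) ->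
  forall (t : term 'I_4) rho u, (size u <= n)%N ->
  sem mul t rho u = sem (Mw a b d) t rho u.
Proof.
move=> H; elim=> [i||c t IH|t1 IH1 t2 IH2|t1 IH1 t2 IH2] rho u Hu //=.
- by rewrite /sscale IH.
- by rewrite /sadd IH1 ?IH2.
- rewrite H //; apply: Mw_local => v Hv.
  + by apply: IH1; apply: leq_trans Hu.
  + by apply: IH2; apply: leq_trans Hu.
Qed.

Theorem mainTheorem17 (S : finType) (P : prod_rule)
  (mul : series S -> series S -> series S) :
  special P -> is_P_product P mul ->
  (forall f g : series S, srev (mul f g) = mul (srev f) (srev g)) /\
  (srev (@szero S) = szero /\
   (forall (c : rat) (f : series S), srev (sscale c f) = sscale c (srev f)) /\
   (forall f g : series S, srev (sadd f g) = sadd (srev f) (srev g)) /\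
   (forall f g : series S, srev (mul f g) = mul (srev f) (srev g))).
Proof.
move=> HP [H0 Hd].
set a := (tpoly P)@_(e4 0 2); set b := (tpoly P)@_(e4 0 3);
set d := (tpoly P)@_(e4 1 3).
have Hab : b * b = b + a * d by exact: coef_assoc.
have Hass := @Mw_assoc S a b d Hab.
set Pc : term 'I_4 := TAdd (TAdd (TAdd (TScale a (TMul (X4 0) (X4 2)))
   (TScale b (TMul (X4 0) (X4 3)))) (TScale b (TMul (X4 1) (X4 2))))
   (TScale d (TMul (X4 1) (X4 3))).
have HPc : tpoly P = tpoly Pc.
  rewrite [LHS](Q_bil HP) -(coef_sym HP) /= /e4 !mpolyXD.
  by rewrite -/a -/b -/d.
have Hsem (f g : series S) (x : S) u : sem (Mw a b d) P (env4 f (sdelta x f) g (sdelta x g)) u =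
    Mw a b d f g (x :: u).
  rewrite (sem_teqv Hass _ HPc) /= /X4 /=.
  case: (env4_o4 f (sdelta x f) g (sdelta x g)) => -> -> -> ->.
  by rewrite /sadd /sscale.
have Heq n : forall f g u, (size u <= n)%N -> mul f g u = Mw a b d f g u.
  elim: n => [|n IH] f g [|x u] //= Hu.
  have := f_equal (fun h => h u) (Hd f g x); rewrite /sdelta => ->.
  by rewrite (sem_local IH) // Hsem.
have Hmul f g : mul f g = Mw a b d f g.
  by apply: functional_extensionality => u; apply: (Heq (size u)).
have Hrev f g : srev (mul f g) = mul (srev f) (srev g) by rewrite !Hmul Mw_rev.
by split=> //; split=> //.
Qed.
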